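(* Let $\mathbb{F}$ be a field, $T$ a $(d,\mathbb{F})$-matrix-tree and $v$ a vertex of $T$. Let $T'=T-T_v$ be obtained by removing $v$ and all its descendants, and let $T''$ be obtained from $T$ by removing all leaves of $T_v$ labelled $L_C$. Then $M(A(T'))$ is isomorphic to $M(A(T''))$.
   Context: $T_v$ is the subtree of $T$ consisting of $v$ and all its descendants. The depth of a rooted tree is the number of edges on a longest root-to-leaf path. A $(d,\mathbb{F})$-matrix-tree is a rooted tree of depth at most $d$ with unary labels from $\{L_R,L_C\}\cup\{L_{i,\alpha}: i\in\{0,\dots,d\},\alpha\in\mathbb{F}\}$ such that: every node labelled $L_C$ is a leaf; every other non-root node is labelled $L_R$; each $L_C$-leaf at distance $k\le d$ from the root carries, for each $i\in\{0,\dots,k-1\}$, exactly one label $L_{i,\alpha}$. The matrix $A(T)$ has rows the $L_R$-nodes, columns the $L_C$-nodes, and entry at $(r,c)$ equal to $0$ if $r$ is not an ancestor of $c$, and equal to the unique $\alpha$ with $c$ labelled $L_{i,\alpha}$ if $r$ is an ancestor of $c$ at distance $i$ from the root. $M(B)$ denotes the column matroid of a matrix $B$. *)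

(* Defs.v *)
From mathcomp Require Import all_boot all_order all_algebra.
From Stdlib Require Import ClassicalEpsilon.
Set Implicit Arguments. Unset Strict Implicit. Unset Printing Implicit Defensive.
Import GRing.Theory.
Local Open Scope ring_scope.

Inductive label (F : Type) : Type :=
  | LR : label F
  | LC : label F
  | Lidx : nat -> F -> label F.
Arguments LR {F}. Arguments LC {F}.

Record rtree (F : Type) := RTree {
  V : finType;
  root : V;
  par : V -> V;
  par_root : par root = root;
  reach : forall x, exists n, iter n par x == root;
  lab : V -> label F -> bool
}.

Arguments root {F} r.
Arguments par {F} r _.
Arguments lab {F} r _ _.
Arguments reach {F} r x.

Section Tree.
Variables (F : fieldType) (T : rtree F).

Definition depth (x : V T) : nat :=
  ex_minn (reach T x).

Definition is_child (x y : V T) : bool := (y != root T) && (par T y == x).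

Definition leaf (x : V T) : bool := [forall y, ~~ is_child x y].

Definition ancestor (r c : V T) : bool :=
  [exists n : 'I_(depth c), iter n.+1 (par T) c == r].

Definition in_subtree (v x : V T) : bool :=
  [exists n : 'I_(depth x).+1, iter n (par T) x == v].

Definition rowT (S : {set V T}) := {x : V T | (x \in S) && lab T x LR}.
Definition colT (S : {set V T}) := {x : V T | (x \in S) && lab T x LC}.

Definition coef (c : V T) (i : nat) : F :=
  epsilon (inhabits 0) (fun a : F => lab T c (Lidx i a)).

(* the matrix A of the tree induced on S (S closed under ancestors, so that
   ancestry and distances from the root are those of T) *)
Definition Amat (S : {set V T}) (r : rowT S) (c : colT S) : F :=
  if ancestor (val r) (val c) then coef (val c) (depth (val r)) else 0.

End Tree.
Arguments Amat {F T} S r c.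

Definition matrix_tree (F : fieldType) (d : nat) (T : rtree F) : Prop :=
  [/\ (forall x : V T, (depth x <= d)%N),
      (forall x i (a : F), lab T x (Lidx i a) -> (i <= d)%N),
      (forall x, lab T x LC -> leaf x),
      (forall x, x != root T -> ~~ lab T x LC -> lab T x LR) &
      (forall x, lab T x LC -> forall i, (i < depth x)%N ->
          exists! a : F, lab T x (Lidx i a))].

(* Column matroid of a matrix B with rows Row and columns Col: ground set Col,
   X independent iff the columns indexed by X are linearly independent. *)
Definition col_indep (F : fieldType) (Row Col : finType) (B : Row -> Col -> F)
  (X : {set Col}) : Prop :=
  forall lam : Col -> F,
    (forall r, \sum_(c in X) lam c * B r c = 0) -> forall c, c \in X -> lam c = 0.

Definition matroid_iso (E1 E2 : finType)
  (I1 : {set E1} -> Prop) (I2 : {set E2} -> Prop) : Prop :=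
  exists f : E1 -> E2, bijective f /\ forall X, I1 X <-> I2 (f @: X).

(* T' = T - T_v  and  T'' = T minus the L_C-leaves of T_v, as vertex sets *)
Definition del_subtree (F : fieldType) (T : rtree F) (v : V T) : {set V T} :=
  [set x | ~~ in_subtree v x].
Definition del_Cleaves (F : fieldType) (T : rtree F) (v : V T) : {set V T} :=
  [set x | ~~ [&& in_subtree v x, leaf x & lab T x LC]].

(* Main.v *)
Require Import Defs.
From mathcomp Require Import all_boot all_order all_algebra.
Import GRing.Theory.
Local Open Scope ring_scope.

Lemma col_indep_transfer (F : fieldType) (R1 R2 C1 C2 : finType)
  (B1 : R1 -> C1 -> F) (B2 : R2 -> C2 -> F) (f : C1 -> C2) (g : C2 -> C1) :
  cancel f g -> cancel g f ->
  (forall r1, exists r2, forall c, B1 r1 c = B2 r2 (f c)) ->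
  (forall r2, (exists r1, forall c, B2 r2 (f c) = B1 r1 c) \/
              (forall c, B2 r2 (f c) = 0)) ->
  forall X, col_indep B1 X <-> col_indep B2 (f @: X).
Proof.
move=> fK gK H1 H2 X; have finj : injective f := can_inj fK.
split.
- move=> ind lam2 Hs c' /imsetP [c cX ->].
  apply: (ind (fun c => lam2 (f c))) => // r1.
  have [r2 Hr2] := H1 r1.
  transitivity (\sum_(c' in f @: X) lam2 c' * B2 r2 c'); last exact: Hs.
  rewrite big_imset /=; last by move=> x y _ _; apply: finj.
  by apply: eq_bigr => c0 _; rewrite Hr2.
- move=> ind lam1 Hs c cX.
  have := ind (fun c' => lam1 (g c')) _ (f c) (imset_f _ cX).
  rewrite fK; apply => r2.
  rewrite big_imset /=; last by move=> x y _ _; apply: finj.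
  have [[r1 Hr1]|Hz] := H2 r2.
  + transitivity (\sum_(c0 in X) lam1 c0 * B1 r1 c0); last exact: Hs.
    by apply: eq_bigr => c0 _; rewrite fK Hr1.
  + by apply: big1 => c0 _; rewrite Hz mulr0.
Qed.

Section TreeFacts.
Variables (F : fieldType) (T : rtree F).

Lemma iter_root n : iter n (par T) (Defs.root T) = Defs.root T.
Proof. by elim: n => //= n ->; rewrite par_root. Qed.

Lemma iter_depth (x : V T) : iter (depth x) (par T) x = Defs.root T.
Proof. rewrite /depth; case: ex_minnP => m /eqP -> _ //. Qed.

Lemma iter_big (x : V T) k : (depth x <= k)%N -> iter k (par T) x = Defs.root T.
Proof.
move=> h; rewrite -(subnK h) iterD iter_depth; exact: iter_root.
Qed.

Lemma in_subtreeP (v x : V T) : in_subtree v x <-> exists k, iter k (par T) x = v.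
Proof.
split.
- by case/existsP => n /eqP <-; exists n.
- case=> k Hk; apply/existsP.
  case: (leqP k (depth x)) => h.
  + by exists (Ordinal (h : (k < (depth x).+1)%N)); rewrite /= Hk.
  + exists (Ordinal (ltnSn (depth x))) => /=.
    by rewrite iter_depth -Hk iter_big // ltnW.
Qed.

Lemma anc_sub (v r c : V T) : ancestor r c -> in_subtree v r -> in_subtree v c.
Proof.
case/existsP => n /eqP Hn /in_subtreeP [m Hm]; apply/in_subtreeP.
by exists (m + n.+1)%N; rewrite iterD Hn.
Qed.
End TreeFacts.

Theorem lemma14 (F : fieldType) (d : nat) (T : rtree F)
  (HT : matrix_tree d T) (v : V T) :
  matroid_iso (col_indep (Amat (del_subtree v)))
              (col_indep (Amat (del_Cleaves v))).
Proof.
case: HT => _ _ HCleaf _ _.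
set S1 := del_subtree v; set S2 := del_Cleaves v.
have memC : forall x, lab T x LC -> (x \in S1) = (x \in S2).
  move=> x hx; rewrite !inE hx HCleaf //.
  by case: (in_subtree v x).
have fP : forall c : colT S1, (val c \in S2) && lab T (val c) LC.
  by case=> x /= /andP [h1 h2]; rewrite -memC // h1 h2.
have gP : forall c : colT S2, (val c \in S1) && lab T (val c) LC.
  by case=> x /= /andP [h1 h2]; rewrite memC // h1 h2.
pose f (c : colT S1) : colT S2 := exist _ (val c) (fP c).
pose g (c : colT S2) : colT S1 := exist _ (val c) (gP c).
have fK : cancel f g by move=> c; apply: val_inj.
have gK : cancel g f by move=> c; apply: val_inj.
exists f; split; first by exists g.
apply: col_indep_transfer gK _ _ => //.
- move=> r1.
  have rP : (val r1 \in S2) && lab T (val r1) LR.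
    case: r1 => x /= /andP [h1 h2]; rewrite h2 andbT.
    by move: h1; rewrite !inE; case: (in_subtree v x).
  by exists (exist _ (val r1) rP) => c.
- move=> r2; case: (boolP (val r2 \in S1)) => h.
  + left.
    have rP : (val r2 \in S1) && lab T (val r2) LR.
      by case: r2 h => x /= /andP [h1 h2] ->.
    by exists (exist _ (val r2) rP) => c.
  + right => c; rewrite /Amat /=.
    case: ifP => // Ha; exfalso.
    move: h; rewrite inE negbK => h.
    have := @anc_sub F T v _ _ Ha h.
    by case: c Ha => x /= /andP [+ _] _; rewrite inE => /negP.
Qed.
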